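(* Let $\mathscr{X}$ be a totally bounded normed metric space with $\|x\|\le1$ for all $x$, consider the $\epsilon$-perturbation channel on $\mathscr{X}$ described in the context, let $0<\epsilon\le1$ and $0\le\delta<m_{\mathscr{Y}}(V_\epsilon)$. Then $$C^\delta_\epsilon=\sup\Big\{ I_{\tilde\delta/|[\![X]\!]|}(Y;X)\ :\ \tilde\delta\ge0,\ X\in\mathscr{F}_{\tilde\delta},\ \tilde\delta\le \delta/m_{\mathscr{Y}}([\![Y]\!])\Big\}\ \text{bits},$$ where for each transmitted UV $X$, $Y$ denotes the corresponding received UV.
   Context: Uncertain variables (UVs): a UV is a map $U$ from a sample space $\Omega$ to a set; jointly considered UVs share $\Omega$. $[\![U]\!]=\{U(\omega)\}$; $[\![U|w]\!]=\{U(\omega):W(\omega)=w\}$, $[\![U|W]\!]=\{[\![U|w]\!]:w\in[\![W]\!]\}$. An uncertainty function on a set $\mathscr{U}$ is a map $m$ on subsets of $\mathscr{U}$ with $m(\emptyset)=0$, $0<m(S)<\infty$ for nonempty $S$, $\max\{m(S_1),m(S_2)\}\le m(S_1\cup S_2)$. Association: with uncertainty functions $m_{\mathscr{X}},m_{\mathscr{Y}}$ on the value sets of $X,Y$, $\mathscr{A}(X;Y)=\{m_{\mathscr{X}}([\![X|y_1]\!]\cap[\![X|y_2]\!])/m_{\mathscr{X}}([\![X]\!]):y_1\ne y_2\in[\![Y]\!]\}\setminus\{0\}$, $\mathscr{A}(Y;X)=\{m_{\mathscr{Y}}([\![Y|x_1]\!]\cap[\![Y|x_2]\!])/m_{\mathscr{Y}}([\![Y]\!]):x_1\ne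 x_2\in[\![X]\!]\}\setminus\{0\}$. $\mathscr{A}\succ\delta$: all elements $>\delta$ (false for $\emptyset$); $\mathscr{A}\preceq\delta$: all elements $\le\delta$ (true for $\emptyset$). $(X,Y)\stackrel{d}{\leftrightarrow}(\delta_1,\delta_2)$ iff $\mathscr{A}(X;Y)\succ\delta_1,\mathscr{A}(Y;X)\succ\delta_2$; $(X,Y)\stackrel{a}{\leftrightarrow}(\delta_1,\delta_2)$ iff $\mathscr{A}(X;Y)\preceq\delta_1,\mathscr{A}(Y;X)\preceq\delta_2$. $\delta$-mutual information: for UVs $U$ (values in $\mathscr{U}$ with uncertainty function $m_{\mathscr{U}}$) and $W$, points $u,u'\in[\![U]\!]$ are $\delta$-connected via $[\![U|W]\!]$ if there are $w_1,\dots,w_N\in[\![W]\!]$ with $u\in[\![U|w_1]\!]$, $u'\in[\![U|w_N]\!]$, $m_{\mathscr{U}}([\![U|w_i]\!]\cap[\![U|w_{i-1}]\!])/m_{\mathscr{U}}([\![U]\!])>\delta$ for $1<i\le N$; a set is $\delta$-connected if all pairs of its points are. A $\delta$-overlap family $[\![U|W]\!]^*_\delta$ is a family of distinct subsets covering $[\![U]\!]$, of largest cardinality among covering families such that (i) each member is $\delta$-connected and contains some $[\![U|w]\!]$; (ii) distinct members $S_1,S_2$ satisfy $m_{\mathscr{U}}(S_1\cap S_2)\le\delta\, m_{\mathscr{U}}([\![U]\!])$; (iii) each $[\![U|w]\!]$ lies in some member. $I_\delta(U;W)=\log_2|[\![U|W]\!]^*_\delta|$ if such a family exists, else $0$. Channel: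 the output space is $\mathscr{Y}=\mathscr{X}$; $m_{\mathscr{X}},m_{\mathscr{Y}}$ are uncertainty functions on $\mathscr{X},\mathscr{Y}$ with $m_{\mathscr{Y}}(\mathscr{Y})=1$. $S_\epsilon(x)=\{y\in\mathscr{Y}:\|x-y\|\le\epsilon\}$; $V_\epsilon=S_\epsilon(x^* )$ where $x^*$ minimizes $m_{\mathscr{Y}}(S_\epsilon(x))$ over $x\in\mathscr{X}$. A codebook is a discrete set $\mathcal{C}\subseteq\mathscr{X}$. $e_\epsilon(x_1,x_2)=m_{\mathscr{Y}}(S_\epsilon(x_1)\cap S_\epsilon(x_2))/m_{\mathscr{Y}}(\mathscr{Y})$. $\mathcal{C}$ is $(\epsilon,\delta)$-distinguishable if $e_\epsilon(x_1,x_2)\le\delta/|\mathcal{C}|$ for all distinct $x_1,x_2\in\mathcal{C}$; $C^\delta_\epsilon=\sup\log_2|\mathcal{C}|$ over $(\epsilon,\delta)$-distinguishable codebooks. For a codebook $\mathcal{C}$, the transmitted UV $X$ and received UV $Y$ satisfy $[\![X]\!]=\mathcal{C}$, $[\![Y]\!]=\bigcup_{x\in\mathcal{C}}S_\epsilon(x)$, $[\![Y|x]\!]=\{y\in[\![Y]\!]:\|x-y\|\le\epsilon\}$, $[\![X|y]\!]=\{x\in[\![X]\!]:\|x-y\|\le\epsilon\}$. Feasible set: $\mathscr{F}_\delta$ is the set of transmitted UVs $X$ with $[\![X]\!]\subseteq\mathscr{X}$ a codebook such that either $(X,Y)\stackrel{d}{\leftrightarrow}(0,\delta/|[\![X]\!]|)$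 or $(X,Y)\stackrel{a}{\leftrightarrow}(1,\delta/|[\![X]\!]|)$. *)

(* Defs.v *)
From HB Require Import structures.
From mathcomp Require Import all_boot all_order all_algebra.
From mathcomp Require Import all_classical all_reals all_analysis.
Set Implicit Arguments.
Unset Strict Implicit.
Unset Printing Implicit Defensive.
Import Order.TTheory GRing.Theory Num.Theory.
Import numFieldNormedType.Exports.
Local Open Scope classical_set_scope.
Local Open Scope ring_scope.

(* number of elements of a set (meaningful for finite sets) *)
Definition card_nat {T : Type} (A : set T) : nat :=
  xget 0%N [set n : nat | (A #= `I_n)%card].

Definition log2 {R : realType} (x : R) : R := ln x / ln 2.

Definition log2_card {R : realType} {T : Type} (F : set T) : \bar R :=
  if pselect (finite_set F) is left _ then (log2 ((card_nat F)%:R : R))%:E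
  else +oo%E.

Definition uncertainty_fun {R : realType} {T : Type} (D : set T)
  (m : set T -> R) : Prop :=
  [/\ m set0 = 0,
      (forall S, S `<=` D -> S !=set0 -> 0 < m S) &
      (forall S1 S2, S1 `<=` D -> S2 `<=` D ->
          Num.max (m S1) (m S2) <= m (S1 `|` S2))].

Definition uv_rng {Omega T : Type} (U : Omega -> T) : set T := range U.
Definition uv_crng {Omega T T' : Type} (U : Omega -> T) (W : Omega -> T')
  (w : T') : set T :=
  [set U o | o in [set o | W o = w]].

Section UV.
Context {R : realType} {Omega T T' : Type}.


Definition assoc_set (m : set T -> R) (U : Omega -> T) (W : Omega -> T')
  : set R :=
  [set r | exists w1 w2, [/\ uv_rng W w1, uv_rng W w2, w1 <> w2 &
     r = m (uv_crng U W w1 `&` uv_crng U W w2) / m (uv_rng U)]] `\` [set 0].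

(* A > delta : all elements > delta (false for the empty set) *)
Definition set_succ (A : set R) (d : R) : Prop :=
  A !=set0 /\ forall r, A r -> d < r.
(* A <= delta : all elements <= delta (true for the empty set) *)
Definition set_preceq (A : set R) (d : R) : Prop :=
  forall r, A r -> r <= d.

Definition dconnected_pts (m : set T -> R) (U : Omega -> T) (W : Omega -> T')
  (d : R) (u u' : T) : Prop :=
  exists (w : nat -> T') (N : nat),
    [/\ (forall i, (i <= N)%N -> uv_rng W (w i)),
        uv_crng U W (w 0%N) u,
        uv_crng U W (w N) u' &
        (forall i, (0 < i <= N)%N ->
           d < m (uv_crng U W (w i) `&` uv_crng U W (w i.-1)) / m (uv_rng U))].

Definition dconnected_set (m : set T -> R) (U : Omega -> T) (W : Omega -> T')
  (d : R) (S : set T) : Prop :=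
  forall u u', S u -> S u' -> dconnected_pts m U W d u u'.

Definition overlap_candidate (m : set T -> R) (U : Omega -> T) (W : Omega -> T')
  (d : R) (F : set (set T)) : Prop :=
  [/\ uv_rng U `<=` \bigcup_(S in F) S,
      (forall S, F S -> dconnected_set m U W d S /\
                        exists w, uv_rng W w /\ uv_crng U W w `<=` S),
      (forall S1 S2, F S1 -> F S2 -> S1 <> S2 ->
                        m (S1 `&` S2) <= d * m (uv_rng U)) &
      (forall w, uv_rng W w -> exists S, F S /\ uv_crng U W w `<=` S)].

Definition overlap_family (m : set T -> R) (U : Omega -> T) (W : Omega -> T')
  (d : R) (F : set (set T)) : Prop :=
  overlap_candidate m U W d F /\
  forall G, overlap_candidate m U W d G -> (G #<= F)%card.

Definition I_delta (m : set T -> R) (U : Omega -> T) (W : Omega -> T')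
  (d : R) : \bar R :=
  match pselect (exists F, overlap_family m U W d F) with
  | left h => log2_card (projT1 (cid h))
  | right _ => 0%E
  end.

End UV.

Section Channel.
Context {R : realType} {V : normedModType R}.

Definition totally_bounded_set (X : set V) : Prop :=
  forall e : R, 0 < e -> exists Fc : set V,
    [/\ finite_set Fc, Fc `<=` X &
        X `<=` \bigcup_(c in Fc) [set y | `|c - y| < e]].

(* S_eps(x) = {y in Y : |x - y| <= eps}, with Y = X *)
Definition S_eps (X : set V) (eps : R) (x : V) : set V :=
  [set y | X y /\ `|x - y| <= eps].

Definition codebook (X : set V) (C : set V) : Prop :=
  [/\ C `<=` X, finite_set C & C !=set0].

Definition e_eps (X : set V) (mY : set V -> R) (eps : R) (x1 x2 : V) : R :=
  mY (S_eps X eps x1 `&` S_eps X eps x2) / mY X.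

Definition distinguishable (X : set V) (mY : set V -> R) (eps d : R)
  (C : set V) : Prop :=
  forall x1 x2, C x1 -> C x2 -> x1 <> x2 ->
    e_eps X mY eps x1 x2 <= d / (card_nat C)%:R.

Definition capacity (X : set V) (mY : set V -> R) (eps d : R) : \bar R :=
  ereal_sup [set (log2 ((card_nat C)%:R : R))%:E | C in
              [set C | codebook X C /\ distinguishable X mY eps d C]].

Definition channel_uvs {Omega : Type} (X : set V) (eps : R)
  (Xt Yt : Omega -> V) : Prop :=
  [/\ codebook X (uv_rng Xt),
      uv_rng Yt = \bigcup_(x in uv_rng Xt) S_eps X eps x,
      (forall x, uv_rng Xt x ->
         uv_crng Yt Xt x = [set y | uv_rng Yt y /\ `|x - y| <= eps]) &
      (forall y, uv_rng Yt y ->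
         uv_crng Xt Yt y = [set x | uv_rng Xt x /\ `|x - y| <= eps])].

Definition disassociated {Omega : Type} (mX mY : set V -> R)
  (Xt Yt : Omega -> V) (d1 d2 : R) : Prop :=
  set_succ (assoc_set mX Xt Yt) d1 /\ set_succ (assoc_set mY Yt Xt) d2.
Definition associated {Omega : Type} (mX mY : set V -> R)
  (Xt Yt : Omega -> V) (d1 d2 : R) : Prop :=
  set_preceq (assoc_set mX Xt Yt) d1 /\ set_preceq (assoc_set mY Yt Xt) d2.

Definition feasible {Omega : Type} (X : set V) (mX mY : set V -> R) (eps d : R)
  (Xt Yt : Omega -> V) : Prop :=
  channel_uvs X eps Xt Yt /\
  (disassociated mX mY Xt Yt 0 (d / (card_nat (uv_rng Xt))%:R) \/
   associated mX mY Xt Yt 1 (d / (card_nat (uv_rng Xt))%:R)).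

End Channel.

(* Main.v *)
Require Import Defs.
From HB Require Import structures.
From mathcomp Require Import all_boot all_order all_algebra.
From mathcomp Require Import all_classical all_reals all_analysis.
Import Order.TTheory GRing.Theory Num.Theory.
Import numFieldNormedType.Exports.
Local Open Scope classical_set_scope.
Local Open Scope ring_scope.

Lemma card_natE {T} {A : set T} {n} : (A #= `I_n)%card -> card_nat A = n.
Proof.
move=> An; rewrite /card_nat; apply: xget_unique => // m /= Am.
apply/card_eq_II; apply: card_eq_trans (card_esym Am) An.
Qed.

Lemma uf_mono {R : realType} {T} {D : set T} {m : set T -> R} {A B} :
  uncertainty_fun D m -> A `<=` B -> B `<=` D -> m A <= m B.
Proof.
case=> _ _ hmax AB BD.
have := hmax A B (subset_trans AB BD) BD.
have -> : A `|` B = B by apply/setUidr.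
by rewrite ge_max => /andP[].
Qed.

Lemma uf_ge0 {R : realType} {T} {D : set T} {m : set T -> R} {A} :
  uncertainty_fun D m -> A `<=` D -> 0 <= m A.
Proof.
case=> h0 hpos _ AD; have [->|/set0P An] := eqVneq A set0; first by rewrite h0.
by apply/ltW/hpos.
Qed.

Lemma uf_gt0 {R : realType} {T} {D : set T} {m : set T -> R} {A} :
  uncertainty_fun D m -> A `<=` D -> A !=set0 -> 0 < m A.
Proof. by case=> _ hpos _; apply: hpos. Qed.

Lemma crng_sub Omega T T' (U : Omega -> T) (W : Omega -> T') w :
  uv_crng U W w `<=` uv_rng U.
Proof. by move=> u [z _ <-]; exists z. Qed.

Lemma member_sub {R : realType} {Omega T T'} {m : set T -> R} {U : Omega -> T}
  {W : Omega -> T'} {d G S} :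
  overlap_candidate m U W d G -> G S -> S `<=` uv_rng U.
Proof.
case=> _ h2 _ _ GS u Su; have [hc _] := h2 S GS.
have [w [N [_ h0 _ _]]] := hc u u Su Su.
exact: crng_sub h0.
Qed.

Section Chan.
Context {R : realType} {V : normedModType R}.
Context {X : set V} {eps : R}.

Lemma chan_rngY_sub {Omega : Type} {Xt Yt : Omega -> V} :
  channel_uvs X eps Xt Yt -> uv_rng Yt `<=` X.
Proof. by case=> _ -> _ _ y [x _ []]. Qed.

Lemma chan_crng {Omega : Type} {Xt Yt : Omega -> V} {x} :
  channel_uvs X eps Xt Yt -> uv_rng Xt x -> uv_crng Yt Xt x = S_eps X eps x.
Proof.
move=> ch; case: (ch) => _ hY h3 _ rx; rewrite h3 //.
apply/seteqP; split => y /=.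
- move=> [ry ny]; split => //; exact: chan_rngY_sub ch _ ry.
- move=> [Xy ny]; split => //; rewrite hY; exists x => //.
Qed.

Lemma cand_rep {mY : set V -> R} {Omega : Type} {Xt Yt : Omega -> V} {d G} :
  channel_uvs X eps Xt Yt -> uncertainty_fun X mY ->
  (forall x, uv_rng Xt x -> d * mY (uv_rng Yt) < mY (S_eps X eps x)) ->
  overlap_candidate mY Yt Xt d G ->
  exists rep : set V -> V,
    (forall S, G S -> uv_rng Xt (rep S) /\ S_eps X eps (rep S) `<=` S) /\
    (forall S1 S2, G S1 -> G S2 -> rep S1 = rep S2 -> S1 = S2).
Proof.
move=> ch uf hd cand.
pose rep S := xget 0 [set x | uv_rng Xt x /\ S_eps X eps x `<=` S].
have repP S : G S -> uv_rng Xt (rep S) /\ S_eps X eps (rep S) `<=` S.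
  move=> GS; apply: (@xgetPex _ 0 [set x | uv_rng Xt x /\ S_eps X eps x `<=` S]).
  case: (cand) => _ h2 _ _; have [_ [w [rw sw]]] := h2 S GS.
  by exists w; split => //; rewrite -(chan_crng ch rw).
exists rep; split => // S1 S2 G1 G2 e12.
case: (pselect (S1 = S2)) => // n12; exfalso.
case: (cand) => _ _ h3 _; have := h3 _ _ G1 G2 n12.
have [r1 s1] := repP _ G1; have [_ s2] := repP _ G2.
have sub : S_eps X eps (rep S1) `<=` S1 `&` S2.
  by move=> y sy; split; [exact: s1|rewrite e12 in sy; exact: s2].
have sX : S1 `&` S2 `<=` X.
  move=> y [y1 _]; apply: (chan_rngY_sub ch); exact: (member_sub cand G1 y y1).
have := uf_mono uf sub sX; have := hd _ r1.
move=> a b c; have := le_lt_trans (le_trans b c) a; by rewrite ltxx.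
Qed.

Lemma cand_card {mY : set V -> R} {Omega : Type} {Xt Yt : Omega -> V} {d G} :
  channel_uvs X eps Xt Yt -> uncertainty_fun X mY ->
  (forall x, uv_rng Xt x -> d * mY (uv_rng Yt) < mY (S_eps X eps x)) ->
  overlap_candidate mY Yt Xt d G -> (G #<= uv_rng Xt)%card.
Proof.
move=> ch uf hd cand; have [rep [rP rI]] := cand_rep ch uf hd cand.
have e : (rep @` G #= G)%card.
  by apply: inj_card_eq => a b; rewrite !in_setE; apply: rI.
apply: (card_le_trans (B := rep @` G)).
  by have /card_eqPle[] := e.
by apply: subset_card_le => _ [S GS <-]; have [] := rP S GS.
Qed.

End Chan.

Lemma arith1 (R : realType) (dt m delta a : R) (n : nat) :
  0 <= dt -> 0 < m -> dt <= delta / m -> (0 < n)%N -> delta < a ->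
  dt / n%:R * m < a.
Proof.
move=> dt0 m0 dtle n0 da.
have h1 : dt * m <= delta by rewrite -ler_pdivlMr.
have h2 : dt / n%:R <= dt.
  rewrite ler_pdivrMr ?ltr0n //; apply: ler_peMr => //; by rewrite ler1n.
apply: le_lt_trans da; apply: (le_trans _ h1); by rewrite ler_pM2r.
Qed.

Lemma arith2 (R : realType) (dt m delta : R) (k n : nat) :
  0 < m -> dt <= delta / m -> 0 <= delta -> (0 < k)%N -> (k <= n)%N ->
  dt / n%:R * m <= delta / k%:R.
Proof.
move=> m0 dtle d0 k0 kn.
have n0 : (0 < n)%N by apply: leq_trans kn.
have h1 : dt * m <= delta by rewrite -ler_pdivlMr.
rewrite mulrAC; apply: (@le_trans _ _ (delta / n%:R)).
  by rewrite ler_pM2r ?invr_gt0 ?ltr0n.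
by apply: ler_wpM2l => //; rewrite lef_pV2 ?posrE ?ltr0n // ler_nat.
Qed.

Lemma codebook_card {R : realType} {V : normedModType R} {X C : set V} :
  codebook X C -> exists n, [/\ (C #= `I_n)%card, card_nat C = n & (0 < n)%N].
Proof.
case=> _ [n Cn] [x Cx]; exists n; split => //; first exact: card_natE.
case: n Cn => //; rewrite II0 card_eq0 => /eqP C0.
by rewrite C0 in Cx.
Qed.

Section Main.
Context {R : realType} {V : normedModType R}.
Variables (X : set V) (mX mY : set V -> R) (eps delta : R) (xstar : V).
Hypotheses (ufX : uncertainty_fun X mX) (ufY : uncertainty_fun X mY)
  (mYX : mY X = 1) (eps0 : 0 < eps) (Xxs : X xstar)
  (hmin : forall x, X x -> mY (S_eps X eps xstar) <= mY (S_eps X eps x))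
  (d0 : 0 <= delta) (dlt : delta < mY (S_eps X eps xstar)).

Lemma cap_ge0 : (0 <= capacity X mY eps delta)%E.
Proof.
apply: (@le_trans _ _ (log2 ((card_nat [set xstar])%:R : R))%:E).
  by rewrite (card_natE card_set1) /log2 ln1 mul0r.
apply: ereal_sup_ubound; exists [set xstar] => //; split.
  split; [by move=> x ->|exact: finite_set1|by exists xstar].
by move=> x1 x2 -> ->.
Qed.

Lemma rngY_pos {Omega : Type} {Xt Yt : Omega -> V} :
  channel_uvs X eps Xt Yt -> 0 < mY (uv_rng Yt).
Proof.
move=> ch; apply: (uf_gt0 ufY); first exact: chan_rngY_sub ch.
case: (ch) => [[CX _ [x Cx]] hY _ _]; exists x; rewrite hY; exists x => //.
split; first exact: CX.
by rewrite subrr normr0 ltW.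
Qed.

Lemma le_dir (v : \bar R) : (exists (dt : R) (Omega : Type) (Xt Yt : Omega -> V),
     [/\ 0 <= dt,
         feasible X mX mY eps dt Xt Yt,
         dt <= delta / mY (uv_rng Yt) &
         v = I_delta mY Yt Xt (dt / (card_nat (uv_rng Xt))%:R)]) ->
  (v <= capacity X mY eps delta)%E.
Proof.
move=> [dt [Om [Xt [Yt [dt0 [ch _] dtle ->]]]]].
have cb : codebook X (uv_rng Xt) by case: ch.
have [n [Cn cardC n0]] := codebook_card cb.
rewrite cardC.
have m0 := rngY_pos ch.
have hd : forall x, uv_rng Xt x ->
    dt / n%:R * mY (uv_rng Yt) < mY (S_eps X eps x).
  move=> x rx; apply: (@arith1 R dt _ delta) => //; apply: (lt_le_trans dlt); apply: hmin.
  by case: cb => + _ _; apply.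
rewrite /I_delta; case: pselect => [h|_]; last exact: cap_ge0.
case: (projT2 (cid h)) => candF _.
set F := projT1 (cid h) in candF *.
have [rep [rP rI]] := cand_rep ch ufY hd candF.
have eRF : (rep @` F #= F)%card.
  by apply: inj_card_eq => a b; rewrite !in_setE; apply: rI.
have RC : rep @` F `<=` uv_rng Xt by move=> _ [S FS <-]; have [] := rP S FS.
have finF : finite_set F.
  apply: card_le_finite (cand_card ch ufY hd candF) _; by exists n.
have [k Fk] := finF.
rewrite /log2_card; case: pselect => [_|//]; rewrite (card_natE Fk).
have Rk : (rep @` F #= `I_k)%card := card_eq_trans eRF Fk.
have kn : (k <= n)%N.
  rewrite -card_le_II; apply: (card_le_trans (B := rep @` F)).
    by have /card_eqPle[] := card_esym Rk.
  apply: (card_le_trans (B := uv_rng Xt)); first exact: subset_card_le.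
  by have /card_eqPle[] := Cn.
have [x0 Cx0] : uv_rng Xt !=set0 by case: cb.
have [S0 [FS0 _]] : exists S, F S /\ uv_crng Yt Xt x0 `<=` S.
  by case: candF => _ _ _; apply.
have k0 : (0 < k)%N.
  case: k Fk {Rk kn} => //; rewrite II0 card_eq0 => /eqP F0.
  by rewrite F0 in FS0.
apply: ereal_sup_ubound; exists (rep @` F); last by rewrite (card_natE Rk).
split.
  split; [|by exists k|by exists (rep S0); exists S0].
  by move=> x /RC; case: cb => + _ _; apply.
move=> _ _ [S1 F1 <-] [S2 F2 <-] neq.
rewrite /e_eps mYX divr1 (card_natE Rk).
have n12 : S1 <> S2 by move=> e; apply: neq; rewrite e.
case: (candF) => _ _ h3 _; have := h3 _ _ F1 F2 n12.
have [_ s1] := rP _ F1; have [_ s2] := rP _ F2.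
have sX : S1 `&` S2 `<=` X.
  move=> y [y1 _]; apply: (chan_rngY_sub ch); exact: (member_sub candF F1 y y1).
move=> hh; apply: le_trans (uf_mono ufY _ sX) _.
  by move=> y [ya yb]; split; [exact: s1|exact: s2].
apply: (le_trans hh); exact: arith2.
Qed.


Lemma ge_dir C : codebook X C -> distinguishable X mY eps delta C ->
  exists (dt : R) (Om : Type) (Xt Yt : Om -> V),
     [/\ 0 <= dt,
         feasible X mX mY eps dt Xt Yt,
         dt <= delta / mY (uv_rng Yt) &
         (log2 ((card_nat C)%:R : R))%:E = I_delta mY Yt Xt (dt / (card_nat (uv_rng Xt))%:R)].
Proof.
move=> cb dist; have [n [Cn cardC n0]] := codebook_card cb.
have CX : C `<=` X by case: cb.
pose Om := {p : V * V | C p.1 /\ S_eps X eps p.1 p.2}.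
pose Xt := fun p : Om => (sval p).1.
pose Yt := fun p : Om => (sval p).2.
have rX : uv_rng Xt = C.
  apply/seteqP; split => [_ [p _ <-]|x Cx]; first by case: (svalP p).
  have sx : S_eps X eps x x by split; [exact: CX|rewrite subrr normr0 ltW].
  by exists (exist _ (x, x) (conj Cx sx)).
have rY : uv_rng Yt = \bigcup_(x in uv_rng Xt) S_eps X eps x.
  rewrite rX; apply/seteqP; split => [_ [p _ <-]|y [x Cx sy]].
    by case: (svalP p) => c s; exists (sval p).1.
  by exists (exist _ (x, y) (conj Cx sy)).
have ch : channel_uvs X eps Xt Yt.
  split => //; first by rewrite rX.
  - move=> x rx; apply/seteqP; split => [_ [p /= px <-]|y [ry nxy]].
      case: (svalP p) => c [Xy nn]; split; first by exists p.
      by rewrite -px.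
    rewrite rX in rx; have Xy : X y by move: ry; rewrite rY => -[z _ []].
    by exists (exist _ (x, y) (conj rx (conj Xy nxy))).
  - move=> y ry; apply/seteqP; split => [_ [p /= py <-]|x [rx nxy]].
      case: (svalP p) => c [Xy nn]; split; first by exists p.
      by rewrite -py.
    rewrite rX in rx; have Xy : X y by move: ry; rewrite rY => -[z _ []].
    by exists (exist _ (x, y) (conj rx (conj Xy nxy))).
have m0 := rngY_pos ch.
set m := mY (uv_rng Yt) in m0 *.
pose dt := delta / m.
have dt0 : 0 <= dt by rewrite divr_ge0 // ltW.
have hd : forall x, uv_rng Xt x -> dt / n%:R * m < mY (S_eps X eps x).
  move=> x rx; apply: (@arith1 R dt _ delta) => //; apply: (lt_le_trans dlt).
  by apply: hmin; apply: CX; rewrite -rX.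
have dm : dt / n%:R * m = delta / n%:R.
  by rewrite /dt mulrAC divfK // gt_eqF.
have distm : forall x1 x2, C x1 -> C x2 -> x1 <> x2 ->
    mY (S_eps X eps x1 `&` S_eps X eps x2) <= delta / n%:R.
  by move=> x1 x2 c1 c2 n12; have := dist _ _ c1 c2 n12; rewrite /e_eps mYX divr1 cardC.
pose Fam := S_eps X eps @` C.
have famC : overlap_candidate mY Yt Xt (dt / n%:R) Fam.
  split.
  - move=> y; rewrite rY rX => -[x Cx sy]; exists (S_eps X eps x) => //; by exists x.
  - move=> _ [x Cx <-]; have rx : uv_rng Xt x by rewrite rX.
    split; last by exists x; split => //; rewrite (chan_crng ch rx).
    move=> u u' su su'; exists (fun _ => x), 0%N; split => //.
    + by rewrite (chan_crng ch rx).
    + by rewrite (chan_crng ch rx).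
    + by case.
  - move=> _ _ [x1 c1 <-] [x2 c2 <-] n12; rewrite dm.
    apply: distm => // e; apply: n12; by rewrite e.
  - move=> w rw; exists (S_eps X eps w); split; last by rewrite (chan_crng ch rw).
    by exists w => //; rewrite -rX.
have famE : (Fam #= C)%card.
  apply: inj_card_eq => x1 x2; rewrite !in_setE => c1 c2 e.
  case: (pselect (x1 = x2)) => // n12; exfalso.
  have := distm _ _ c1 c2 n12; rewrite -e setIid => h.
  have : delta / n%:R <= delta.
    by rewrite ler_pdivrMr ?ltr0n // ler_peMr // ler1n.
  move=> h2; have := le_trans h h2; have := lt_le_trans dlt (hmin _ (CX _ c1)).
  by move=> a b; have := lt_le_trans a b; rewrite ltxx.
have GC : forall G, overlap_candidate mY Yt Xt (dt / n%:R) G -> (G #<= C)%card.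
  by move=> G cG; rewrite -rX; apply: (cand_card ch ufY _ cG); rewrite /m in hd.
exists dt, Om, Xt, Yt; split => //.
- split => //; right; split.
  + move=> r [[w1 [w2 [_ _ _ ->]]] _].
    have rXp : 0 < mX (uv_rng Xt).
      by apply: (uf_gt0 ufX); rewrite rX //; case: cb.
    rewrite ler_pdivrMr // mul1r; apply: (uf_mono ufX).
      by move=> x [x1 _]; exact: (@crng_sub _ _ _ _ _ _ x x1).
    by rewrite rX.
  + move=> r [[w1 [w2 [r1 r2 n12 ->]]] _].
    rewrite (chan_crng ch r1) (chan_crng ch r2) rX cardC.
    rewrite rX in r1 r2; have := distm _ _ r1 r2 n12.
    rewrite -/m /dt mulrAC => h; by rewrite ler_pM2r ?invr_gt0.
- rewrite rX cardC /I_delta; case: pselect => [h|nh].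
    case: (projT2 (cid h)) => candF maxF.
    set F := projT1 (cid h) in candF maxF *.
    have FC : (F #= C)%card.
      apply/card_eqPle; split; first exact: GC.
      rewrite -(card_le_eql famE); exact: maxF.
    have Fn := card_eq_trans FC Cn.
    rewrite /log2_card; case: pselect => [_|nf]; first by rewrite (card_natE Fn).
    by exfalso; apply: nf; exists n.
  exfalso; apply: nh; exists Fam; split => // G cG.
  rewrite (card_le_eqr famE); exact: GC.
Qed.

End Main.

Theorem theorem4 (R : realType) (V : normedModType R) (X : set V)
  (mX mY : set V -> R) (eps delta : R) (xstar : V) :
  totally_bounded_set X ->
  (forall x, X x -> `|x| <= 1) ->
  uncertainty_fun X mX -> uncertainty_fun X mY -> mY X = 1 ->
  0 < eps -> eps <= 1 ->
  X xstar -> (forall x, X x -> mY (S_eps X eps xstar) <= mY (S_eps X eps x)) ->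
  0 <= delta -> delta < mY (S_eps X eps xstar) ->
  capacity X mY eps delta =
  ereal_sup [set v : \bar R | exists (dt : R) (Omega : Type) (Xt Yt : Omega -> V),
     [/\ 0 <= dt,
         feasible X mX mY eps dt Xt Yt,
         dt <= delta / mY (uv_rng Yt) &
         v = I_delta mY Yt Xt (dt / (card_nat (uv_rng Xt))%:R)]].
Proof.
move=> _ _ ufX ufY mYX eps0 _ Xxs hmin d0 dlt.
apply/eqP; rewrite eq_le; apply/andP; split.
- apply/ereal_supP => _ [C [cb dist] <-].
  have [dt [Om [Xt [Yt [a b c e]]]]] :=
    @ge_dir _ _ X mX mY eps delta xstar ufX ufY mYX eps0 hmin d0 dlt _ cb dist.
  by apply: ereal_sup_ubound; exists dt, Om, Xt, Yt; split.
- by apply/ereal_supP => v hv; apply: (@le_dir _ _ X mX mY eps delta xstar ufY mYX eps0 Xxs hmin d0 dlt).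
Qed.
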